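(* For every partition $\mu$ (viewed as a weak composition of length $n$ by appending zeros), $\mathrm{PR}1(\mu)=\mathrm{PR}2(\mathrm{inc}(\mu))$, where \[ \mathrm{PR}1(\mu)=\prod_{s\in\mathrm{dg}(\mu)}(1-q^{\mathrm{leg}(s)}t^{\mathrm{arm}(s)+1}),\qquad \mathrm{PR}2(\alpha)=\prod_{i\ge1}(t;t)_{m_i}\prod_{\substack{s\in\mathrm{dg}(\mathrm{inc}(\alpha))\\ s\text{ not in row }1}}(1-q^{\mathrm{leg}(s)+1}t^{\mathrm{arm}(s)+1}), \] $m_i$ is the number of parts of $\alpha$ equal to $i$, and $(t;t)_k=(1-t)(1-t^2)\cdots(1-t^k)$.
   Context: For a weak composition $\alpha=(\alpha_1,\dots,\alpha_n)$ (nonnegative integers), $\mathrm{dg}(\alpha)$ is the set of cells $(i,r)$, $1\le i\le n$, $1\le r\le\alpha_i$ (column $i$ from the left has $\alpha_i$ cells; rows counted from the bottom). $\mathrm{leg}(i,r)=\alpha_i-r$. $\mathrm{arm}(i,r)$ is the number of cells $(j,r)\in\mathrm{dg}(\alpha)$ with $j>i$ and $\alpha_j\le\alpha_i$, plus the number of cells $(j,r-1)\in\mathrm{dg}(\alpha)$ with $j<i$ and $\alpha_j<\alpha_i$. $\mathrm{inc}(\alpha)$ is the rearrangement of $\alpha$ into weakly increasing order. *)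

(* Defs.v *)
From mathcomp Require Import all_boot all_order all_algebra.
Set Implicit Arguments. Unset Strict Implicit. Unset Printing Implicit Defensive.
Import GRing.Theory.
Local Open Scope ring_scope.

(* A weak composition alpha = (alpha_1,...,alpha_n) is a seq nat;
   alpha_i (1-indexed) is [part a i]. *)
Definition part (a : seq nat) (i : nat) : nat := nth 0%N a i.-1.

Definition in_dg (a : seq nat) (i r : nat) : bool :=
  [&& (1 <= i)%N, (i <= size a)%N, (1 <= r)%N & (r <= part a i)%N].

Definition dg (a : seq nat) : seq (nat * nat) :=
  [seq (i, r) | i <- iota 1 (size a), r <- iota 1 (part a i)].

Definition leg (a : seq nat) (s : nat * nat) : nat := (part a s.1 - s.2)%N.

Definition arm (a : seq nat) (s : nat * nat) : nat :=
  let i := s.1 in let r := s.2 in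
  (count (fun j => (i < j)%N && (part a j <= part a i)%N && in_dg a j r)
         (iota 1 (size a))
   + count (fun j => (j < i)%N && (part a j < part a i)%N && (2 <= r)%N
                     && in_dg a j r.-1)
         (iota 1 (size a)))%N.

Definition inc (a : seq nat) : seq nat := sort leq a.

Definition tpoch {R : comRingType} (t : R) (k : nat) : R :=
  \prod_(1 <= i < k.+1) (1 - t ^+ i).

Definition PR1 {R : comRingType} (q t : R) (mu : seq nat) : R :=
  \prod_(s <- dg mu) (1 - q ^+ leg mu s * t ^+ (arm mu s).+1).

(* m_i = number of parts equal to i; m_i = 0 for i > max part, so the
   product over i >= 1 is the finite product below. *)
Definition PR2 {R : comRingType} (q t : R) (a : seq nat) : R :=
  (\prod_(1 <= i < (\max_(x <- a) x).+1) tpoch t (count_mem i a)) *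
  \prod_(s <- dg (inc a) | s.2 != 1%N)
     (1 - q ^+ (leg (inc a) s).+1 * t ^+ (arm (inc a) s).+1).

Definition is_partition (mu : seq nat) : bool :=
  sorted geq mu && all (fun x => 0 < x)%N mu.

Definition pad (n : nat) (mu : seq nat) : seq nat := mu ++ nseq (n - size mu) 0%N.

(* Main.v *)
Require Import Defs.
From mathcomp Require Import all_boot all_order all_algebra zify.
Local Open Scope nat_scope.

Lemma iotaS' m n : iota m.+1 n = map S (iota m n).
Proof. by elim: n m => //= n IH m; rewrite IH. Qed.

Lemma arm_formula (a : seq nat) (i r : nat) : (i < size a)%N ->
  arm a (i.+1, r) =
  (count (fun x => (x <= nth 0 a i) && (0 < r) && (r <= x)) (drop i.+1 a)
 + count (fun x => (x < nth 0 a i) && (1 < r) && (r.-1 <= x)) (take i a))%N.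
Proof.
move=> ilt; rewrite /arm /= iotaS' !count_map.
congr addn.
- have -> : iota 0 (size a) = iota 0 i.+1 ++ iota i.+1 (size a - i.+1).
    by rewrite -iotaD subnKC.
  rewrite count_cat.
  rewrite (eq_in_count (a2 := pred0)); last first.
    move=> j; rewrite mem_iota => H /=.
    have -> : (i.+1 < j.+1)%N = false by lia.
    done.
  rewrite count_pred0 add0n.
  rewrite (eq_in_count (a2 := fun j => (fun x => (x <= nth 0 a i) && (0 < r) && (r <= x)) (nth 0 a j))); last first.
    move=> j; rewrite mem_iota /= /in_dg /part /= => H.
    have -> : (j < size a)%N by lia.
    have -> : (i.+1 < j.+1) = true by lia.
    by case: (r <= _)%N; case: (_ <= _)%N; case: r.
  rewrite -[drop _ _](@take_oversize _ (size a - i.+1)) ?size_drop // -(map_nth_iota 0) // count_map //.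
- have -> : iota 0 (size a) = iota 0 i ++ iota i (size a - i).
    by rewrite -iotaD subnKC // ltnW.
  rewrite count_cat.
  rewrite [X in (_ + X)%N](eq_in_count (a2 := pred0)); last first.
    move=> j; rewrite mem_iota => H /=.
    have -> : (j.+1 < i.+1)%N = false by lia.
    done.
  rewrite count_pred0 addn0.
  rewrite (eq_in_count (a2 := fun j => (fun x => (x < nth 0 a i) && (1 < r) && (r.-1 <= x)) (nth 0 a j))); last first.
    move=> j; rewrite mem_iota /= /in_dg /part /= => H.
    have -> : (j < size a)%N by lia.
    have -> : (j.+1 < i.+1) = true by lia.
    case: r => [|[|r]] //=; rewrite ?andbF //.
  rewrite -(map_nth_iota0 0) ?count_map //; lia.
Qed.

Lemma split_nth (a : seq nat) i : i < size a ->
  a = take i a ++ nth 0 a i :: drop i.+1 a.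
Proof. by move=> H; rewrite -drop_nth // cat_take_drop. Qed.
Arguments split_nth {a i}.

Lemma sorted_split {e : rel nat} {a : seq nat} {i} : transitive e -> i < size a ->
  sorted e a -> all (e (nth 0 a i)) (drop i.+1 a) /\ all (fun x => e x (nth 0 a i)) (take i a).
Proof.
move=> tr H; rewrite sorted_pairwise // [in pairwise _ _](split_nth H) pairwise_cat /=.
case/and4P => /allrelP Hr _ Hd _; split => //.
apply/allP => x xin; apply: Hr => //; exact: mem_head.
Qed.

Lemma count_split_nth (P : pred nat) (a : seq nat) i : i < size a ->
  count P a = count P (take i a) + P (nth 0 a i) + count P (drop i.+1 a).
Proof. by move=> H; rewrite {1}(split_nth H) count_cat /= addnA. Qed.

Definition N (a : seq nat) r v := count (fun x => (r <= x) && (x < v)) a.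

Lemma count_split_le (s : seq nat) r v : r <= v ->
  count (fun x => (r <= x) && (x <= v)) s = count_mem v s + count (fun x => (r <= x) && (x < v)) s.
Proof.
move=> rv; elim: s => //= x s ->.
case: (ltngtP x v) => [xv|xv|->]; rewrite ?eqxx ?rv /=; try case: (r <= x); rewrite /= ?ltnn ?andbF; lia.
Qed.

Lemma arm_dec (a : seq nat) i r : sorted geq a -> i < size a -> 0 < r -> r <= nth 0 a i ->
  arm a (i.+1, r) = count_mem (nth 0 a i) (drop i.+1 a) + N a r (nth 0 a i).
Proof.
move=> so H r0 rv; rewrite arm_formula //.
have tr : transitive geq by move=> x y z H1 H2; exact: leq_trans H2 H1.
have [Hd Ht] := sorted_split tr H so.
rewrite (eq_in_count (a1 := fun x => _ && _ && _) (a2 := fun x => (r <= x) && (x <= nth 0 a i))); last first.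
  move=> x xin; have := allP Hd x xin; rewrite /= r0 => ->; by rewrite andbC.
rewrite [X in _ + X](eq_in_count (a2 := pred0)); last first.
  by move=> x xin; have := allP Ht x xin; rewrite /= ltnNge => ->.
rewrite count_pred0 addn0 count_split_le // /N (count_split_nth _ _ _ H) /=.
rewrite ltnn andbF addn0 (eq_in_count (a2 := pred0) (s := take i a)); last first.
  by move=> x xin; have := allP Ht x xin; rewrite /= ltnNge => ->; rewrite andbF.
by rewrite count_pred0.
Qed.

Lemma arm_inc (b : seq nat) i r : sorted leq b -> i < size b -> 0 < r -> r < nth 0 b i ->
  arm b (i.+1, r.+1) = count_mem (nth 0 b i) (drop i.+1 b) + N b r (nth 0 b i).
Proof.
move=> so H r0 rv; rewrite arm_formula //.
have [Hd Ht] := sorted_split leq_trans H so.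
rewrite (eq_in_count (a1 := fun x => _ && _ && _) (a2 := pred1 (nth 0 b i))); last first.
  move=> x xin; have := allP Hd x xin; rewrite /= => vx.
  by rewrite eqn_leq vx andbT; case: (x <= _); rewrite //= (leq_trans rv vx).
rewrite /N (count_split_nth _ _ _ H) /= ltnn andbF addn0.
rewrite [X in _ = _ + (_ + X)](eq_in_count (a2 := pred0) (s := drop i.+1 b)); last first.
  by move=> x xin; have := allP Hd x xin; rewrite /= ltnNge => ->; rewrite andbF.
rewrite count_pred0 addn0; congr addn.
apply: eq_count => x /=; rewrite ltnS r0 andbT; by case: (x < _); rewrite //= andbC.
Qed.

Definition Pl (c : seq nat) :=
  [seq (nth 0 c i, count_mem (nth 0 c i) (drop i.+1 c)) | i <- iota 0 (size c)].

Lemma Pl_cons x c : Pl (x :: c) = (x, count_mem x c) :: Pl c.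
Proof. rewrite /Pl /= iotaS' -map_comp; by rewrite drop0. Qed.

Lemma aux_cnt (c k : nat) : (c == k) + (k < c) = (k < 1 + c).
Proof.
case: (eqVneq c k) => [->|ne]; rewrite ?add1n ?ltnS ?ltnn ?leqnn //=.
by rewrite add0n ltn_neqAle eq_sym ne.
Qed.

Lemma count_Pl c y k : count_mem (y, k) (Pl c) = (k < count_mem y c).
Proof.
elim: c => [|x c IH] //; rewrite Pl_cons /= IH.
rewrite xpair_eqE; case: (eqVneq x y) => [->|xy] /=.
- rewrite aux_cnt //.
- by [].
Qed.

Lemma perm_Pl a b : perm_eq a b -> perm_eq (Pl a) (Pl b).
Proof.
move=> H; rewrite /perm_eq; apply/allP => [[y k]] _ /=.
by rewrite !count_Pl (permP H).
Qed.

Lemma count_flat (f : nat -> nat) s y k : uniq s ->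
  count_mem (y, k) (flatten [seq [seq (i, k') | k' <- iota 0 (f i)] | i <- s])
  = (y \in s) && (k < f y).
Proof.
elim: s => [|i s IH] //= /andP[iS us]; rewrite count_cat IH // count_map inE.
case: (eqVneq y i) => [->|yi] /=.
- rewrite (negbTE iS) addn0.
  rewrite (eq_count (a2 := pred1 k)); last by move=> k' /=; rewrite xpair_eqE eqxx /= eq_sym.
  by rewrite (count_uniq_mem _ (iota_uniq _ _)) mem_iota.
- rewrite (eq_count (a2 := pred0)); last by move=> k' /=; rewrite xpair_eqE eq_sym (negbTE yi).
  by rewrite count_pred0.
Qed.

Import GRing.Theory.
Local Open Scope ring_scope.

Definition K {R : comRingType} (q t : R) (a : seq nat) (v e : nat) : R :=
  \prod_(r <- iota 1 v.-1) (1 - q ^+ (v - r) * t ^+ (e + N a r v).+1).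

Lemma top_split {R : comRingType} (q t : R) a v e :
  \prod_(r <- iota 1 v) (1 - q ^+ (v - r) * t ^+ (e + N a r v).+1)
  = (if (0 < v)%N then 1 - t ^+ e.+1 else 1) * K q t a v e.
Proof.
rewrite /K; case: v => [|w]; first by rewrite !big_nil mulr1.
have -> : iota 1 w.+1 = iota 1 w ++ [:: w.+1] by rewrite -[in LHS](addn1 w) iotaD add1n.
rewrite big_cat big_seq1 /= mulrC; congr (_ * _).
have -> : N a w.+1 w.+1 = 0%N.
  rewrite /N (eq_count (a2 := pred0)) ?count_pred0 // => x /=; apply/negbTE/negP => /andP[h1 h2]; lia.
by rewrite subnn expr0 mul1r addn0.
Qed.

Lemma PR1_eq {R : comRingType} (q t : R) a : sorted geq a ->
  PR1 q t a = (\prod_(p <- Pl a) (if (0 < p.1)%N then 1 - t ^+ p.2.+1 else 1)) *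
              \prod_(p <- Pl a) K q t a p.1 p.2.
Proof.
move=> so.
rewrite /PR1 /dg big_allpairs_dep (iotaS' 0 (size a)) big_map /Pl !big_map -big_split /=.
rewrite big_seq [RHS]big_seq; apply: eq_bigr => i; rewrite mem_iota add0n => /andP[_ H].
rewrite /part /=.
rewrite big_seq (eq_bigr (fun r => 1 - q ^+ (nth 0 a i - r) * t ^+ (count_mem (nth 0 a i) (drop i.+1 a) + N a r (nth 0 a i)).+1)); last first.
  move=> r; rewrite mem_iota => /andP[r1 rv]; rewrite /leg /= arm_dec //; lia.
by rewrite -big_seq top_split.
Qed.

Lemma PR2_cells {R : comRingType} (q t : R) a b : sorted leq b -> perm_eq b a ->
  \prod_(s <- dg b | s.2 != 1%N) (1 - q ^+ (leg b s).+1 * t ^+ (arm b s).+1)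
  = \prod_(p <- Pl b) K q t a p.1 p.2.
Proof.
move=> so pba.
rewrite /dg big_mkcond big_allpairs_dep (iotaS' 0 (size b)) big_map /Pl big_map.
rewrite big_seq [RHS]big_seq; apply: eq_bigr => i; rewrite mem_iota add0n => /andP[_ H].
rewrite /part /= /K.
case Ev: (nth 0 b i) => [|w] /=; first by rewrite !big_nil.
rewrite big_cons /= mul1r (iotaS' 1 w) big_map big_seq [RHS]big_seq.
apply: eq_bigr => r; rewrite mem_iota => /andP[r1 rw].
rewrite /leg /= /part /= arm_inc //; last by rewrite Ev; lia.
rewrite Ev /N (permP pba).
have -> : (w - r).+1 = (w.+1 - r)%N by lia.
by rewrite eqSS -lt0n r1.
Qed.

Lemma PR2_top {R : comRingType} (t : R) b :
  \prod_(1 <= i < (\max_(x <- b) x).+1) tpoch t (count_mem i b)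
  = \prod_(p <- Pl b) (if (0 < p.1)%N then 1 - t ^+ p.2.+1 else 1).
Proof.
set M := \max_(x <- b) x.
have -> : index_iota 1 M.+1 = iota 1 M by rewrite /index_iota subSS subn0.
rewrite /tpoch.
under eq_bigr => i _ do rewrite /index_iota subSS subn0 (iotaS' 0) big_map.
rewrite -[RHS]big_mkcond -[RHS]big_filter.
transitivity (\prod_(p <- flatten [seq [seq (i, k) | k <- iota 0 (count_mem i b)] | i <- iota 1 M]) (1 - t ^+ p.2.+1)).
  by rewrite big_flatten /= big_map; apply: eq_bigr => i _; rewrite big_map.
apply: perm_big; rewrite /perm_eq; apply/allP => [[y k]] _ /=.
rewrite count_flat ?iota_uniq // count_filter mem_iota.
case: y => [|y].
  rewrite (eq_count (a1 := predI _ _) (a2 := pred0)) ?count_pred0 ?andbF //.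
  by move=> [y' k'] /=; rewrite xpair_eqE; case: (y' == 0)%N /eqP => [->|] //; rewrite andbF.
rewrite (eq_count (a1 := predI _ _) (a2 := pred1 (y.+1, k))); last first.
  by move=> [y0 k0] /=; case: eqP => // -[-> _].
rewrite count_Pl /=.
case Hk: (k < count_mem y.+1 b)%N; rewrite ?andbF ?andbT //.
apply/eqP; rewrite add1n ltnS. suff -> : (y.+1 <= M)%N by []. apply: (@leq_bigmax_seq _ b xpredT (fun x => x) y.+1) => //.
by rewrite -has_pred1 has_count (leq_ltn_trans (leq0n k) Hk).
Qed.

Lemma pad_sorted n mu : sorted geq mu -> sorted geq (pad n mu).
Proof.
have tr : transitive geq by move=> x y z H1 H2; exact: leq_trans H2 H1.
move=> so; rewrite /pad !(sorted_pairwise tr) pairwise_cat -(sorted_pairwise tr) so /=.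
apply/andP; split.
- by apply/allrelP => x y _ /nseqP [-> _].
- by elim: (n - size mu)%N => //= k ->; rewrite andbT; apply/allP => x /nseqP[-> _].
Qed.

Theorem mainTheorem10 (R : comRingType) (q t : R) (n : nat) (mu : seq nat) :
  is_partition mu -> (size mu <= n)%N ->
  PR1 q t (pad n mu) = PR2 q t (inc (pad n mu)).
Proof.
move=> /andP[smu _] _.
have so := pad_sorted n mu smu.
set a := pad n mu.
set b := inc a.
have sb : sorted leq b by apply: sort_sorted; exact: leq_total.
have pba : perm_eq b a by apply/permPl; exact: perm_sort.
have ib : inc b = b by apply: sorted_sort => //; exact: leq_trans.
rewrite /PR2 ib PR2_top (PR2_cells q t a b sb pba) PR1_eq //.
by congr (_ * _); apply: perm_big; apply: perm_Pl; rewrite perm_sym.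
Qed.
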